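(* For all positive integers $d,m,r$ and every $\varepsilon>0$, $\mathbf{n}_{\mathrm{pol}}(d,m,r,\varepsilon)=\mathbf{n}_\infty(d,m,r,\varepsilon)$.
   Context: Spaces are real finite-dimensional normed spaces. A finite-dimensional normed space $F$ is polyhedral if its closed unit ball has finitely many extreme points; $\mathrm{Pol}_d$ is the class of polyhedral spaces $F$ whose dual unit ball $B_{F^*}$ has exactly $2d$ extreme points (e.g. $\ell_\infty^d\in\mathrm{Pol}_d$). $\mathrm{Emb}(X,Y)$ is the set of linear isometric embeddings with the operator-norm metric. An $r$-coloring is a map into $\{0,\dots,r-1\}$; a subset $F$ of the colored space $M$ is $\varepsilon$-monochromatic if for some color $i$ every element of $F$ is within distance $\varepsilon$ of an element of $M$ of color $i$. $\mathbf{n}_\infty(d,m,r,\varepsilon)$ is the least $n$ such that every $r$-coloring of $\mathrm{Emb}(\ell_\infty^d,\ell_\infty^n)$ has an $\varepsilon$-monochromatic set $\gamma\circ\mathrm{Emb}(\ell_\infty^d,\ell_\infty^m)$ for some $\gamma\in\mathrm{Emb}(\ell_\infty^m,\ell_\infty^n)$. $\mathbf{n}_{\mathrm{pol}}(d,m,r,\varepsilon)$ is the least $n\ge m$ such that for all $F\in\mathrm{Pol}_d$ and $G\in\mathrm{Pol}_m$, every $r$-coloring of $\mathrm{Emb}(F,\ell_\infty^n)$ has an $\varepsilon$-monochromatic set $T\circ\mathrm{Emb}(F,G)$ for some $T\in\mathrm{Emb}(G,\ell_\infty^n)$. *)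

(* Defs.v *)
(* real finite-dimensional normed spaces are modelled as
   row-vector spaces 'rV[R]_k equipped with a norm function, R : realType. *)
From HB Require Import structures.
From mathcomp Require Import all_boot all_order all_algebra.
From mathcomp Require Import reals.
Set Implicit Arguments. Unset Strict Implicit. Unset Printing Implicit Defensive.
Import Order.TTheory GRing.Theory Num.Theory.
Local Open Scope ring_scope.

Section Defs.
Variable R : realType.

Definition is_norm (k : nat) (N : 'rV[R]_k -> R) : Prop :=
  [/\ forall x, N x = 0 -> x = 0,
      forall (a : R) x, N (a *: x) = `|a| * N x &
      forall x y, N (x + y) <= N x + N y].

Definition extreme_point (k : nat) (C : 'rV[R]_k -> Prop) (x : 'rV[R]_k) : Prop :=
  C x /\ forall y z (t : R), C y -> C z -> 0 < t -> t < 1 ->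
    x = t *: y + (1 - t) *: z -> y = z.

Definition unit_ball (k : nat) (N : 'rV[R]_k -> R) (x : 'rV[R]_k) : Prop :=
  N x <= 1.

(* pairing of a functional f (identified with a row vector) with x *)
Definition pairing (k : nat) (f x : 'rV[R]_k) : R := \sum_(i < k) f 0 i * x 0 i.

Definition dual_unit_ball (k : nat) (N : 'rV[R]_k -> R) (f : 'rV[R]_k) : Prop :=
  forall x, N x <= 1 -> pairing f x <= 1.

Definition finitely_many_extreme (k : nat) (C : 'rV[R]_k -> Prop) : Prop :=
  exists s : seq 'rV[R]_k, forall x, extreme_point C x -> x \in s.

Definition exactly_n_extreme (k : nat) (C : 'rV[R]_k -> Prop) (n : nat) : Prop :=
  exists s : seq 'rV[R]_k,
    [/\ uniq s, size s = n & forall x, extreme_point C x <-> x \in s].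

Definition polyhedral (k : nat) (N : 'rV[R]_k -> R) : Prop :=
  finitely_many_extreme (unit_ball N).

Definition Pol (d : nat) (k : nat) (N : 'rV[R]_k -> R) : Prop :=
  polyhedral N /\ exactly_n_extreme (dual_unit_ball N) (2 * d)%N.

Definition linf (n : nat) (x : 'rV[R]_n) : R := \big[Num.max/0]_(i < n) `|x 0 i|.

(* linear isometric embeddings (linear maps act on row vectors on the right) *)
Definition is_emb (k l : nat) (NF : 'rV[R]_k -> R) (NG : 'rV[R]_l -> R)
  (T : 'M[R]_(k, l)) : Prop := forall x, NG (x *m T) = NF x.

Definition opdist_le (k n : nat) (NF : 'rV[R]_k -> R) (T S : 'M[R]_(k, n)) (e : R)
  : Prop := forall x, NF x <= 1 -> linf (x *m (T - S)) <= e.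

Definition eps_mono (k n r : nat) (NF : 'rV[R]_k -> R) (c : 'M[R]_(k, n) -> 'I_r)
  (A : 'M[R]_(k, n) -> Prop) (e : R) : Prop :=
  exists i : 'I_r, forall S, A S ->
    exists S', [/\ is_emb NF (@linf n) S', c S' = i & opdist_le NF S S' e].

Definition comp_emb (k l n : nat) (NF : 'rV[R]_k -> R) (NG : 'rV[R]_l -> R)
  (T : 'M[R]_(l, n)) (S : 'M[R]_(k, n)) : Prop :=
  exists Phi : 'M[R]_(k, l), is_emb NF NG Phi /\ S = Phi *m T.

Definition P_inf (d m r : nat) (e : R) (n : nat) : Prop :=
  forall c : 'M[R]_(d, n) -> 'I_r,
    exists gamma : 'M[R]_(m, n),
      is_emb (@linf m) (@linf n) gamma /\
      eps_mono (@linf d) c (comp_emb (@linf d) (@linf m) gamma) e.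

Definition P_pol (d m r : nat) (e : R) (n : nat) : Prop :=
  (m <= n)%N /\
  forall (kF : nat) (NF : 'rV[R]_kF -> R), is_norm NF -> Pol d NF ->
  forall (kG : nat) (NG : 'rV[R]_kG -> R), is_norm NG -> Pol m NG ->
  forall c : 'M[R]_(kF, n) -> 'I_r,
    exists T : 'M[R]_(kG, n),
      is_emb NG (@linf n) T /\ eps_mono NF c (comp_emb NF NG T) e.

Definition is_least (P : nat -> Prop) (n : nat) : Prop :=
  P n /\ forall k, P k -> (n <= k)%N.

End Defs.

(* Main.v *)
Require Import Defs.
From HB Require Import structures.
From mathcomp Require Import all_boot all_order all_algebra.
From mathcomp Require Import classical_sets reals.
From mathcomp Require Import ring lra zify.
Set Implicit Arguments. Unset Strict Implicit. Unset Printing Implicit Defensive.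
Import Order.TTheory GRing.Theory Num.Theory.
Local Open Scope ring_scope.

Section Aux.
Variable R : realType.

Definition infI (X : Type) (P : X -> Prop) (F : X -> R) : R :=
  inf (fun y => exists2 x, P x & F x = y).

Lemma infI_le (X : Type) (P : X -> Prop) (F : X -> R) (b : R) x :
  (forall x, P x -> b <= F x) -> P x -> infI P F <= F x.
Proof.
move=> hb Px; apply: (ge_inf (E := fun y => exists2 x, P x & F x = y)).
  by exists b => y [z Pz <-]; exact: hb.
by exists x.
Qed.

Lemma le_infI (X : Type) (P : X -> Prop) (F : X -> R) (c : R) x0 :
  P x0 -> (forall x, P x -> c <= F x) -> c <= infI P F.
Proof.
move=> P0 hc; apply: lb_le_inf; first by exists (F x0), x0.
by move=> y [z Pz <-]; exact: hc.
Qed.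

Lemma pairingDr k (f x y : 'rV[R]_k) : pairing f (x + y) = pairing f x + pairing f y.
Proof. by rewrite /pairing -big_split /=; apply: eq_bigr => i _; rewrite mxE mulrDr. Qed.
Lemma pairingDl k (f g x : 'rV[R]_k) : pairing (f + g) x = pairing f x + pairing g x.
Proof. by rewrite /pairing -big_split /=; apply: eq_bigr => i _; rewrite mxE mulrDl. Qed.
Lemma pairingZr k (f x : 'rV[R]_k) a : pairing f (a *: x) = a * pairing f x.
Proof. by rewrite /pairing mulr_sumr; apply: eq_bigr => i _; rewrite mxE mulrCA. Qed.
Lemma pairingZl k (f x : 'rV[R]_k) a : pairing (a *: f) x = a * pairing f x.
Proof. by rewrite /pairing mulr_sumr; apply: eq_bigr => i _; rewrite mxE mulrA. Qed.
Lemma pairingNr k (f x : 'rV[R]_k) : pairing f (- x) = - pairing f x.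
Proof. by rewrite -scaleN1r pairingZr mulN1r. Qed.
Lemma pairingNl k (f x : 'rV[R]_k) : pairing (- f) x = - pairing f x.
Proof. by rewrite -scaleN1r pairingZl mulN1r. Qed.
Lemma pairing0r k (f : 'rV[R]_k) : pairing f 0 = 0.
Proof. by rewrite -(scale0r (0 : 'rV[R]_k)) pairingZr mul0r. Qed.
Lemma pairing0l k (f : 'rV[R]_k) : pairing 0 f = 0.
Proof. by rewrite -(scale0r (0 : 'rV[R]_k)) pairingZl mul0r. Qed.
Lemma pairing_delta k (f : 'rV[R]_k) i : pairing f (delta_mx 0 i) = f 0 i.
Proof.
rewrite /pairing (bigD1 i) //= mxE !eqxx mulr1 big1 ?addr0 //.
move=> j ji.
by rewrite mxE (negbTE ji) andbF mulr0.
Qed.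
Lemma pairing_mul k l (f : 'rV[R]_l) (x : 'rV[R]_k) (M : 'M[R]_(k, l)) :
  pairing f (x *m M) = pairing (f *m M^T) x.
Proof.
rewrite /pairing; under eq_bigr do rewrite mxE mulr_sumr.
rewrite exchange_big /=; apply: eq_bigr => i _; rewrite mxE mulr_suml.
by apply: eq_bigr => j _; rewrite mxE mulrCA mulrC.
Qed.
Lemma pairing_sum k (f : 'rV[R]_k) (I : Type) (r : seq I) (P : pred I) (F : I -> 'rV[R]_k) :
  pairing (\sum_(i <- r | P i) F i) f = \sum_(i <- r | P i) pairing (F i) f.
Proof.
apply: (big_morph (fun g => pairing g f)) => [g h|]; first exact: pairingDl.
exact: pairing0l.
Qed.
Lemma row_eq_pairing k (f g : 'rV[R]_k) :
  (forall x, pairing f x = pairing g x) -> f = g.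
Proof.
move=> h; apply/rowP => i; rewrite -!pairing_delta; exact: h.
Qed.
Lemma row_sum_deltaE k (y : 'rV[R]_k) : y = \sum_i y 0 i *: delta_mx 0 i.
Proof. by rewrite {1}(row_sum_delta y). Qed.



Definition sublin k (p : 'rV[R]_k -> R) :=
  (forall x y, p (x + y) <= p x + p y) /\ (forall a x, 0 <= a -> p (a *: x) = a * p x).
Definition Dp k (p : 'rV[R]_k -> R) (f : 'rV[R]_k) := forall u, pairing f u <= p u.

Lemma sublin0 k (p : 'rV[R]_k -> R) : sublin p -> p 0 = 0.
Proof. by case=> _ h; rewrite -(scale0r (0 : 'rV[R]_k)) h // mul0r. Qed.

Lemma sublin_lb k (p : 'rV[R]_k -> R) y : sublin p -> - p (- y) <= p y.
Proof.
move=> hp; have := (proj1 hp) y (- y); rewrite subrr sublin0 //.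
by rewrite -lerBlDr sub0r.
Qed.

Definition Top k (v : 'rV[R]_k) (p : 'rV[R]_k -> R) (y : 'rV[R]_k) : R :=
  infI (fun t : R => 0 <= t) (fun t => p (y + t *: v) - t * p v).

Lemma Top_bound k (v : 'rV[R]_k) p y : sublin p ->
  forall t : R, 0 <= t -> - p (- y) <= p (y + t *: v) - t * p v.
Proof.
move=> hp t t0; have h := (proj1 hp) (y + t *: v) (- y).
rewrite [_ + - y]addrC addKr (proj2 hp) // in h; lra.
Qed.

Lemma Top_elem k (v : 'rV[R]_k) p y t : sublin p -> 0 <= t ->
  Top v p y <= p (y + t *: v) - t * p v.
Proof.
move=> hp t0; rewrite /Top; apply: (infI_le (b := - p (- y))) => //.
by move=> s s0; apply: Top_bound.
Qed.

Lemma Top_le k (v : 'rV[R]_k) p y : sublin p -> Top v p y <= p y.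
Proof.
move=> hp; apply: le_trans (Top_elem v y hp (lexx 0)) _.
by rewrite scale0r addr0 mul0r subr0.
Qed.

Lemma Top_neg k (v : 'rV[R]_k) p : sublin p -> Top v p (- v) <= - p v.
Proof.
move=> hp; apply: le_trans (Top_elem v (- v) hp ler01) _.
by rewrite scale1r addNr sublin0 // mul1r sub0r.
Qed.

Lemma Top_lin k (v : 'rV[R]_k) p f : sublin p -> Dp p f -> pairing f v = p v ->
  Dp (Top v p) f.
Proof.
move=> hp hf hv y; apply: (le_infI (x0 := 0)) => // t t0.
by rewrite lerBrDr -hv -pairingZr -pairingDr hf.
Qed.

Lemma Top_sublin k (v : 'rV[R]_k) p : sublin p -> sublin (Top v p).
Proof.
move=> hp; split.
  move=> y1 y2; set L := Top v p (y1 + y2).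
  rewrite -lerBlDl; apply: (le_infI (x0 := 0)) => // t2 t2ge.
  rewrite lerBlDl -lerBlDr; apply: (le_infI (x0 := 0)) => // t1 t1ge.
  rewrite lerBlDr.
  apply: le_trans (Top_elem v (y1 + y2) hp (addr_ge0 t1ge t2ge)) _.
  have -> : y1 + y2 + (t1 + t2) *: v = (y1 + t1 *: v) + (y2 + t2 *: v).
    by rewrite scalerDl addrACA.
  have := (proj1 hp) (y1 + t1 *: v) (y2 + t2 *: v); rewrite mulrDl; lra.
move=> a y; rewrite le0r => /orP [/eqP -> | a0].
  rewrite mul0r scale0r; apply/eqP; rewrite eq_le; apply/andP; split.
    apply: le_trans (Top_elem v 0 hp (lexx 0)) _.
    by rewrite scale0r addr0 sublin0 // mul0r subr0.
  apply: (le_infI (x0 := 0)) => // t t0.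
  by rewrite add0r (proj2 hp) // subrr.
apply/eqP; rewrite eq_le; apply/andP; split.
  rewrite -ler_pdivrMl //; apply: (le_infI (x0 := 0)) => // t t0.
  rewrite ler_pdivrMl //.
  apply: le_trans (Top_elem v (a *: y) hp (mulr_ge0 (ltW a0) t0)) _.
  rewrite -scalerA -scalerDr (proj2 hp) ?(ltW a0) //.
  by rewrite mulrBr mulrA.
apply: (le_infI (x0 := 0)) => // t t0.
have := Top_elem v y hp (divr_ge0 t0 (ltW a0)).
rewrite -(ler_pM2l a0) => /le_trans; apply.
have -> : y + t / a *: v = a^-1 *: (a *: y + t *: v).
  by rewrite scalerDr scalerA mulVf ?lt0r_neq0 // scale1r scalerA mulrC.
rewrite (proj2 hp) ?invr_ge0 ?(ltW a0) //.
have ha : a != 0 by rewrite lt0r_neq0.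
rewrite le_eqVlt; apply/orP; left; apply/eqP; field.
by [].
Qed.

Fixpoint Qit k (vs : seq 'rV[R]_k) (p : 'rV[R]_k -> R) : 'rV[R]_k -> R :=
  if vs is v :: vs' then Qit vs' (Top v p) else p.

Lemma Qit_sublin k vs (p : 'rV[R]_k -> R) : sublin p -> sublin (Qit vs p).
Proof. by elim: vs p => //= v vs IH p hp; apply: IH; apply: Top_sublin. Qed.

Lemma Qit_le k vs (p : 'rV[R]_k -> R) y : sublin p -> Qit vs p y <= p y.
Proof.
elim: vs p => //= v vs IH p hp.
exact: le_trans (IH _ (Top_sublin v hp)) (Top_le v y hp).
Qed.

Lemma Qit_neg k vs (p : 'rV[R]_k -> R) v : sublin p -> v \in vs ->
  Qit vs p (- v) <= - Qit vs p v.
Proof.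
elim: vs p => //= w vs IH p hp; rewrite in_cons => /orP [/eqP -> | vin].
  have h1 := Qit_le vs (- w) (Top_sublin w hp).
  have h2 := Qit_le vs w (Top_sublin w hp).
  have h3 := Top_neg w hp; have h4 := Top_le w w hp; lra.
exact: IH (Top_sublin w hp) vin.
Qed.

Lemma sublin_linear k (q : 'rV[R]_k -> R) : sublin q ->
  (forall i, q (- delta_mx 0 i) <= - q (delta_mx 0 i)) ->
  forall y, q y = pairing (\row_i q (delta_mx 0 i)) y.
Proof.
move=> hq hn.
have hs : forall a i, q (a *: delta_mx 0 i) <= a * q (delta_mx 0 i).
  move=> a i; case/orP: (le_total 0 a) => a0; first by rewrite (proj2 hq).
  rewrite -[a]opprK scaleNr -scalerN (proj2 hq) ?oppr_ge0 //.
  have := hn i; rewrite ?opprK; nra.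
have hsum : forall y : 'rV[R]_k, q y <= pairing (\row_i q (delta_mx 0 i)) y.
  move=> y; rewrite {1}(row_sum_deltaE y) /pairing.
  apply: (big_ind2 (fun a b => q a <= b)).
  - by rewrite sublin0.
  - by move=> a1 a2 b1 b2 h1 h2; apply: le_trans ((proj1 hq) _ _) (lerD h1 h2).
  by move=> i _; rewrite mxE mulrC hs.
move=> y; apply/eqP; rewrite eq_le hsum /=.
have := hsum (- y); rewrite pairingNr => h.
apply: le_trans (sublin_lb y hq); lra.
Qed.

Lemma Qit_ext k vs (r : 'rV[R]_k -> R) (y z : 'rV[R]_k) (t : R) :
  sublin r -> Dp r y -> Dp r z -> 0 < t -> t < 1 ->
  (forall u, t * pairing y u + (1 - t) * pairing z u = Qit vs r u) ->
  Dp (Qit vs r) y /\ Dp (Qit vs r) z.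
Proof.
elim: vs r => [|v vs IH] r hr hy hz t0 t1 /= hu; first by [].
have hqv : r v <= Qit vs (Top v r) v.
  have h1 := Qit_le vs (- v) (Top_sublin v hr).
  have h2 := Top_neg v hr.
  have h3 := sublin_lb v (Qit_sublin vs (Top_sublin v hr)); lra.
have := hu v; have := hy v; have := hz v => hzv hyv huv.
have hyv' : pairing y v = r v by nra.
have hzv' : pairing z v = r v by nra.
apply: IH => //; first exact: Top_sublin.
  exact: Top_lin.
exact: Top_lin.
Qed.

Lemma HB_ext k (p : 'rV[R]_k -> R) x : sublin p -> exists f, [/\ Dp p f,
  pairing f x = p x & forall y z t, Dp p y -> Dp p z -> 0 < t -> t < 1 ->
    f = t *: y + (1 - t) *: z -> y = z].
Proof.
move=> hp.
set vs := x :: [seq delta_mx 0 i | i <- enum 'I_k].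
set q := Qit vs p.
have hq : sublin q by apply: Qit_sublin.
have hneg : forall i, q (- delta_mx 0 i) <= - q (delta_mx 0 i).
  move=> i; apply: Qit_neg => //.
  by rewrite in_cons; apply/orP; right; apply: map_f; rewrite mem_enum.
set f := \row_i q (delta_mx 0 i).
have hlin : forall y, q y = pairing f y by apply: sublin_linear.
have eqf : forall y, Dp q y -> y = f.
  move=> y hy; apply: row_eq_pairing => u; apply/eqP; rewrite eq_le.
  have := hy u; have := hy (- u); rewrite -!hlin hlin pairingNr hlin pairingNr.
  move=> h1 h2; rewrite h2 /=; lra.
exists f; split.
- by move=> u; rewrite -hlin; apply: Qit_le.
- apply/eqP; rewrite eq_le -hlin Qit_le //=.
  have h1 : q (- x) <= Top x p (- x).
    by rewrite /q /vs /=; apply: Qit_le; apply: Top_sublin.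
  have h2 := Top_neg x hp; have h3 := sublin_lb x hq; lra.
move=> y z t hy hz t0 t1 hf.
have hu : forall u, t * pairing y u + (1 - t) * pairing z u = q u.
  by move=> u; rewrite hlin hf pairingDl !pairingZl.
have [hy' hz'] := Qit_ext hp hy hz t0 t1 hu.
by rewrite (eqf _ hy') (eqf _ hz').
Qed.

Lemma norm_sublin k (N : 'rV[R]_k -> R) : is_norm N -> sublin N.
Proof.
case=> _ hh ht; split => // a x a0; by rewrite hh ger0_norm.
Qed.

Lemma norm_ge0 k (N : 'rV[R]_k -> R) x : is_norm N -> 0 <= N x.
Proof.
move=> hN; have := sublin_lb x (norm_sublin hN).
case: hN => _ hh _; rewrite -scaleN1r hh normrN normr1 mul1r; lra.
Qed.

Lemma normN k (N : 'rV[R]_k -> R) x : is_norm N -> N (- x) = N x.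
Proof. by case=> _ hh _; rewrite -scaleN1r hh normrN normr1 mul1r. Qed.

Lemma dualE k (N : 'rV[R]_k -> R) : is_norm N -> dual_unit_ball N = Dp N.
Proof.
move=> hN; apply: boolp.funext => f; apply: boolp.propext; split; last first.
  by move=> h x Nx; apply: le_trans (h x) Nx.
move=> h u; have := norm_ge0 u hN; rewrite le0r => /orP [/eqP N0|Npos].
  have u0 : u = 0 by case: hN => /(_ u N0).
  by rewrite N0 u0 pairing0r.
have := h ((N u)^-1 *: u); rewrite pairingZr.
case: (hN) => _ hh _; rewrite hh ger0_norm; last by rewrite invr_ge0 ltW.
rewrite mulVf; last by rewrite lt0r_neq0.
by move=> /(_ (lexx _)); rewrite ler_pdivrMl // mulr1.
Qed.

Lemma Dp_opp k (N : 'rV[R]_k -> R) f : is_norm N -> Dp N f -> Dp N (- f).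
Proof. by move=> hN hf u; rewrite pairingNl -pairingNr -(normN u hN). Qed.

Lemma ext_norm k (N : 'rV[R]_k -> R) x : is_norm N ->
  exists f, extreme_point (dual_unit_ball N) f /\ pairing f x = N x.
Proof.
move=> hN; have [f [hf fx hext]] := HB_ext x (norm_sublin hN).
by exists f; rewrite dualE //; split => //; split.
Qed.

Lemma pairingC k (f x : 'rV[R]_k) : pairing f x = pairing x f.
Proof. by rewrite /pairing; apply: eq_bigr => i _; rewrite mulrC. Qed.

Lemma pairing_deltal k (f : 'rV[R]_k) i : pairing (delta_mx 0 i) f = f 0 i.
Proof. by rewrite pairingC pairing_delta. Qed.

Lemma deltaE k (i j : 'I_k) : (delta_mx 0 i : 'rV[R]_k) 0 j = (j == i)%:R.
Proof. by rewrite mxE eqxx. Qed.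

Lemma linf_ge n (x : 'rV[R]_n) i : `|x 0 i| <= linf x.
Proof. by rewrite /linf (bigD1 i) //= le_max lexx. Qed.

Lemma linf_le n (x : 'rV[R]_n) c : 0 <= c -> (forall i, `|x 0 i| <= c) -> linf x <= c.
Proof.
move=> c0 h; rewrite /linf; apply: (big_ind (fun v => v <= c)) => //.
by move=> a b ha hb; rewrite ge_max ha hb.
Qed.

Lemma linf_ge0 n (x : 'rV[R]_n) : 0 <= linf x.
Proof.
rewrite /linf; apply: (big_ind (fun v => 0 <= v)) => //.
by move=> a b ha hb; rewrite le_max ha.
Qed.

Lemma linf_attain n (x : 'rV[R]_n) : (0 < n)%N -> exists i, linf x = `|x 0 i|.
Proof.
move=> n0.
have : linf x = 0 \/ exists i, linf x = `|x 0 i|.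
  rewrite /linf; apply: (big_ind (fun v => v = 0 \/ exists i, v = `|x 0 i|)).
  - by left.
  - move=> a b ha hb; case: (leP a b) => _; [exact: hb | exact: ha].
  by move=> i _; right; exists i.
case=> [h0|//]; exists (Ordinal n0); apply/eqP; rewrite eq_le.
by rewrite linf_ge h0 normr_ge0.
Qed.

Lemma linf_norm n : is_norm (@linf R n).
Proof.
split.
- move=> x h0; apply/rowP => i; rewrite mxE; apply/eqP; rewrite -normr_eq0.
  by rewrite eq_le normr_ge0 -h0 linf_ge.
- move=> a x; apply/eqP; rewrite eq_le; apply/andP; split.
    apply: linf_le; first by rewrite mulr_ge0 ?linf_ge0.
    by move=> i; rewrite mxE normrM ler_wpM2l ?linf_ge.
  case: n x => [|n] x.
    by rewrite /linf big_ord0 mulr0 big_ord0.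
  have [i ->] := linf_attain x (ltn0Sn n).
  by have := linf_ge (a *: x) i; rewrite mxE normrM.
- move=> x y; apply: linf_le; first by rewrite addr_ge0 ?linf_ge0.
  move=> i; rewrite mxE; apply: le_trans (ler_normD _ _) _.
  by rewrite lerD ?linf_ge.
Qed.

Lemma ext_opp k (N : 'rV[R]_k -> R) f : is_norm N ->
  extreme_point (Dp N) f -> extreme_point (Dp N) (- f).
Proof.
move=> hN [hf hext]; split; first exact: Dp_opp.
move=> y z t hy hz t0 t1 e; apply: oppr_inj; apply: (hext _ _ t) => //;
  try exact: Dp_opp.
by rewrite -[f]opprK e opprD -!scalerN.
Qed.

Lemma ext_nonzero k (N : 'rV[R]_k -> R) f g : is_norm N -> Dp N g -> g != 0 ->
  extreme_point (Dp N) f -> f != 0.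
Proof.
move=> hN hg g0 [hf hext]; apply/eqP => f0; move/eqP: g0; apply.
have : g = - g.
  apply: (hext _ _ (2^-1)) => //; first exact: Dp_opp.
  - by rewrite invr_gt0 ltr0n.
  - by rewrite invf_lt1 ?ltr0n // ltr1n.
  rewrite f0 scalerN -scaleNr -scalerDl.
  have -> : 2^-1 - (1 - 2^-1) = 0 :> R by field.
  by rewrite scale0r.
move/eqP; rewrite -addr_eq0 -mulr2n -scaler_nat scaler_eq0 pnatr_eq0 /=.
by move/eqP.
Qed.

Lemma ext_multi k (N : 'rV[R]_k -> R) f (I : finType) (lam : I -> R)
  (g : I -> 'rV[R]_k) i0 : is_norm N -> extreme_point (Dp N) f ->
  (forall i, 0 <= lam i) -> \sum_i lam i <= 1 -> (forall i, Dp N (g i)) ->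
  f = \sum_i lam i *: g i -> 0 < lam i0 -> g i0 = f.
Proof.
move=> hN [hf hext] l0 l1 hg ef li0.
have hs : \sum_i lam i = lam i0 + \sum_(i | i != i0) lam i by rewrite (bigD1 i0).
have ef' : f = lam i0 *: g i0 + \sum_(i | i != i0) lam i *: g i.
  by rewrite ef (bigD1 i0).
have hrest : 0 <= \sum_(i | i != i0) lam i by apply: sumr_ge0.
have [t1|tlt1] := eqVneq (lam i0) 1.
  have h0 : \sum_(i | i != i0) lam i = 0 by apply/eqP; rewrite eq_le hrest; lra.
  rewrite ef' t1 scale1r big1 ?addr0 // => i ii0.
  by rewrite (psumr_eq0P (fun i _ => l0 i) h0 ii0) scale0r.
have tl1 : lam i0 < 1 by rewrite lt_neqAle tlt1 /=; lra.
set w := (1 - lam i0)^-1 *: \sum_(i | i != i0) lam i *: g i.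
have hw : Dp N w.
  move=> u; rewrite /w pairingZl pairing_sum.
  have hu := norm_ge0 u hN.
  rewrite ler_pdivrMl ?subr_gt0 //.
  apply: le_trans (_ : (\sum_(i | i != i0) lam i) * N u <= _); last first.
    by apply: ler_wpM2r => //; lra.
  rewrite mulr_suml; apply: ler_sum => i _.
  by rewrite pairingZl ler_wpM2l //; apply: hg.
have e2 : f = lam i0 *: g i0 + (1 - lam i0) *: w.
  by rewrite ef' /w scalerA mulfV ?scale1r // subr_eq0 eq_sym.
have := hext _ _ _ (hg i0) hw li0 tl1 e2 => gw.
by rewrite e2 -gw -scalerDl addrC subrK scale1r.
Qed.

Lemma Dp_linf_sdelta n (s : R) (i : 'I_n) : `|s| <= 1 -> Dp (@linf R n) (s *: delta_mx 0 i).
Proof.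
move=> hs u; rewrite pairingZl pairing_deltal.
apply: le_trans (ler_norm _) _; rewrite normrM.
apply: le_trans (linf_ge u i); rewrite -[X in _ <= X]mul1r.
by apply: ler_wpM2r.
Qed.

Lemma Dp_linf_delta n (i : 'I_n) : Dp (@linf R n) (delta_mx 0 i).
Proof. by rewrite -[delta_mx 0 i]scale1r; apply: Dp_linf_sdelta; rewrite normr1. Qed.

Lemma linf_delta_le n (i : 'I_n) : linf (delta_mx 0 i : 'rV[R]_n) <= 1.
Proof.
apply: linf_le => // j; rewrite deltaE; case: (j == i); by rewrite ?normr1 ?normr0.
Qed.

Lemma Dp_unit n (y : 'rV[R]_n) i : Dp (@linf R n) y -> y 0 i = 1 -> y = delta_mx 0 i.
Proof.
move=> hy yi; apply/rowP => j; rewrite deltaE.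
have [->|ji] := eqVneq j i; first by rewrite yi.
have lin : forall s : R, `|s| <= 1 -> linf (delta_mx 0 i + s *: delta_mx 0 j : 'rV[R]_n) <= 1.
  move=> s hs; apply: linf_le => // l; rewrite !mxE !eqxx /=.
  have [->|li] := eqVneq l i.
    by rewrite ?eqxx eq_sym (negbTE ji) mulr0 addr0 normr1.
  by rewrite add0r; case: (l == j); rewrite ?mulr1 ?mulr0 ?normr0.
have n1 : `|1 : R| <= 1 by rewrite normr1.
have n2 : `|-1 : R| <= 1 by rewrite normrN normr1.
have h1 := le_trans (hy _) (lin 1 n1).
have h2 := le_trans (hy _) (lin (-1) n2).
rewrite pairingDr pairingZr !pairing_delta yi in h1.
rewrite pairingDr pairingZr !pairing_delta yi in h2.
change (y 0 j = 0); lra.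
Qed.

Lemma ext_delta n (i : 'I_n) : extreme_point (Dp (@linf R n)) (delta_mx 0 i).
Proof.
split; first exact: Dp_linf_delta.
move=> y z t hy hz t0 t1 e.
have yi : y 0 i <= 1 by have := le_trans (hy _) (linf_delta_le i); rewrite pairing_delta.
have zi : z 0 i <= 1 by have := le_trans (hz _) (linf_delta_le i); rewrite pairing_delta.
have ei : 1 = t * y 0 i + (1 - t) * z 0 i.
  by have := congr1 (fun M : 'rV[R]_n => M 0 i) e; rewrite !mxE !eqxx.
have y1 : y 0 i = 1 by nra.
have z1 : z 0 i = 1 by nra.
by rewrite (Dp_unit hy y1) (Dp_unit hz z1).
Qed.

Lemma delta_inj n : injective (fun i : 'I_n => (delta_mx 0 i : 'rV[R]_n)).
Proof.
move=> i j /(congr1 (fun M : 'rV[R]_n => M 0 i)); rewrite !deltaE eqxx.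
by case: (i == j) /eqP => // _ /eqP; rewrite pnatr_eq0.
Qed.

Lemma linf_dual_ext n : (0 < n)%N ->
  exactly_n_extreme (dual_unit_ball (@linf R n)) (2 * n).
Proof.
move=> n0; rewrite dualE; last exact: linf_norm.
exists ([seq delta_mx 0 i | i <- enum 'I_n] ++ [seq - delta_mx 0 i | i <- enum 'I_n]).
split.
- have i1 : injective (fun i : 'I_n => (delta_mx 0 i : 'rV[R]_n)) by exact: delta_inj.
  have i2 : injective (fun i : 'I_n => - (delta_mx 0 i : 'rV[R]_n)).
    by move=> i j e; apply: delta_inj; apply: oppr_inj.
  rewrite cat_uniq (map_inj_uniq i1) (map_inj_uniq i2) enum_uniq /= andbT.
  apply/hasPn => x /mapP [j _ ->]; apply/mapP => [[i _]].
  move/(congr1 (fun M : 'rV[R]_n => M 0 i)); rewrite !mxE !eqxx /=.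
  case: (i == j); rewrite /= ?oppr0.
    by move/eqP; rewrite -subr_eq0 -opprD oppr_eq0 -natrD pnatr_eq0.
  by move/eqP; rewrite eq_sym pnatr_eq0.
- by rewrite size_cat !size_map -enumT size_enum_ord addnn mul2n.
move=> f; rewrite mem_cat; split; last first.
  case/orP => /mapP [i _ ->]; first exact: ext_delta.
  by apply: ext_opp; [exact: linf_norm | exact: ext_delta].
move=> hf.
set lam := fun i => `|f 0 i|.
set g := fun i => Num.sg (f 0 i) *: (delta_mx 0 i : 'rV[R]_n).
have hg : forall i, Dp (@linf R n) (g i).
  by move=> i; apply: Dp_linf_sdelta; rewrite normr_sg; case: (_ != _); rewrite ?ler01.
have hsum : \sum_i lam i <= 1.
  set u := \row_i Num.sg (f 0 i).
  have hu : linf u <= 1.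
    by apply: linf_le => // i; rewrite mxE normr_sg; case: (_ != _); rewrite ?ler01.
  have := le_trans (proj1 hf u) hu.
  suff -> : pairing f u = \sum_i lam i by [].
  by rewrite /pairing; apply: eq_bigr => i _; rewrite mxE /lam normrEsg mulrC.
have ef : f = \sum_i lam i *: g i.
  apply/rowP => j; rewrite summxE (bigD1 j) //= big1 ?addr0.
    by rewrite !mxE !eqxx mulr1 /lam mulrC -numEsg.
  by move=> i ij; rewrite !mxE eq_sym (negbTE ij) /= !mulr0.
have f0 : f != 0.
  apply: (@ext_nonzero _ (@linf R n) f (delta_mx 0 (Ordinal n0))) => //.
  - exact: linf_norm.
  - exact: Dp_linf_delta.
  apply/eqP => /(congr1 (fun M : 'rV[R]_n => M 0 (Ordinal n0))).
  by rewrite !mxE !eqxx /= => /eqP; rewrite oner_eq0.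
have [i0 fi0] : exists i0, f 0 i0 != 0.
  apply/boolp.not_existsP => hall; move/eqP: f0; apply; apply/rowP => j.
  by rewrite mxE; apply/eqP; apply/negPn/negP; apply: (hall j).
have := ext_multi (i0 := i0) (linf_norm n) hf (fun i => normr_ge0 _) hsum hg ef.
rewrite /lam normr_gt0 fi0 => /(_ isT) <-; rewrite /g.
move: fi0; rewrite neq_lt => /orP [fn|fp].
  have -> : Num.sg (f 0 i0) = -1 by apply/eqP; rewrite sgr_cp0.
  by rewrite scaleN1r; apply/orP; right; apply: map_f; rewrite mem_enum.
have -> : Num.sg (f 0 i0) = 1 by apply/eqP; rewrite sgr_cp0.
by rewrite scale1r; apply/orP; left; apply: map_f; rewrite mem_enum.
Qed.

Lemma linf_polyhedral n : polyhedral (@linf R n).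
Proof.
exists [seq \row_i (if (b : {ffun 'I_n -> bool}) i then 1 else -1) | b <- enum {ffun 'I_n -> bool}].
move=> x [hx hext].
have hall : forall i, `|x 0 i| = 1.
  move=> i; have hi := le_trans (linf_ge x i) hx.
  apply/eqP; rewrite eq_le hi /= leNgt; apply/negP => lt1.
  set dl := 1 - `|x 0 i|.
  have dl0 : 0 < dl by rewrite /dl subr_gt0.
  set y := x + dl *: delta_mx 0 i; set z := x - dl *: delta_mx 0 i.
  have hb : forall s : R, `|s| <= dl -> unit_ball (@linf R n) (x + s *: delta_mx 0 i).
    move=> s hs; rewrite /unit_ball; apply: linf_le => // j; rewrite !mxE !eqxx /=.
    have [->|ji] := eqVneq j i.
      rewrite mulr1; apply: le_trans (ler_normD _ _) _; rewrite /dl in hs; lra.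
    have ij : (i == j) = false by rewrite eq_sym (negbTE ji).
    by rewrite ?ij ?(negbTE ji) mulr0 addr0; apply: le_trans (linf_ge x j) hx.
  have hy' : `|dl| <= dl by rewrite ger0_norm // ltW.
  have hz' : `|- dl| <= dl by rewrite normrN ger0_norm // ltW.
  have := hext _ _ (2^-1) (hb dl hy') (hb (- dl) hz').
  have h2 : (0 : R) < 2^-1 by rewrite invr_gt0 ltr0n.
  have h3 : (2 : R)^-1 < 1 by rewrite invf_lt1 ?ltr0n // ltr1n.
  move=> /(_ h2 h3) e.
  have hex : x = 2^-1 *: (x + dl *: delta_mx 0 i) + (1 - 2^-1) *: (x + - dl *: delta_mx 0 i).
    by apply/rowP => j; rewrite !mxE; field.
  have := e hex => /(congr1 (fun M : 'rV[R]_n => M 0 i)).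
  rewrite !mxE !eqxx /= mulr1; lra.
apply/mapP; exists [ffun i => 0 <= x 0 i]; first by rewrite mem_enum.
apply/rowP => i; rewrite !mxE ffunE.
have := hall i; case: (lerP 0 (x 0 i)) => h.
  by rewrite ger0_norm.
by rewrite ltr0_norm // => <-; rewrite opprK.
Qed.

Lemma linf_Pol n : (0 < n)%N -> Pol n (@linf R n).
Proof. by move=> n0; split; [exact: linf_polyhedral | exact: linf_dual_ext]. Qed.

Lemma pairs (T : zmodType) d (s : seq T) : uniq s -> size s = (2 * d)%N ->
  (forall x, x \in s -> - x \in s) -> (forall x, x \in s -> x != - x) ->
  exists f : 'I_d -> T, [/\ forall i, f i \in s,
    forall x, x \in s -> exists i, x = f i \/ x = - f i &
    forall i j, i != j -> f i != f j /\ f i != - f j].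
Proof.
elim: d s => [|d IH] s us ss hneg hself.
  exists (fun _ => 0); split; try by case.
  by case: s ss {us hneg hself}.
case: s us ss hneg hself => [|x s0] // us ss hneg hself.
move: (us) => /= /andP [xs0 us0].
have xx : x != - x by apply: hself; rewrite mem_head.
have nx0 : - x \in s0.
  have := hneg x (mem_head _ _); rewrite in_cons => /orP [/eqP e|//].
  by move: xx; rewrite e eqxx.
set s' := rem (- x) s0.
have ms' : forall y, (y \in s') = (y != - x) && (y \in s0).
  by move=> y; rewrite /s' (mem_rem_uniq _ us0) inE.
have [f' [f's f'c f'd]] : exists f : 'I_d -> T, [/\ forall i, f i \in s',
    forall x, x \in s' -> exists i, x = f i \/ x = - f i &
    forall i j, i != j -> f i != f j /\ f i != - f j].
  apply: IH.
  - exact: rem_uniq.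
  - rewrite size_rem // -[size s0]/((size (x :: s0)).-1) ss.
    by rewrite !mulnS.
  - move=> y; rewrite !ms' => /andP [ynx ys0].
    have := hneg y; rewrite in_cons ys0 orbT => /(_ isT).
    rewrite in_cons => /orP [/eqP e|->].
      by move: ynx; rewrite -e opprK eqxx.
    rewrite andbT; apply: contraNN xs0 => /eqP e.
    by rewrite -[x]opprK -e opprK.
  - move=> y; rewrite ms' => /andP [_ ys0]; apply: hself.
    by rewrite in_cons ys0 orbT.
have f'x : forall j, (f' j != x) /\ (f' j != - x).
  move=> j; have := f's j; rewrite ms' => /andP [h1 h2]; split => //.
  by apply: contraNN xs0 => /eqP <-.
exists (fun i => if unlift ord0 i is Some j then f' j else x); split.
- move=> i; case: unliftP => [j _|_]; last exact: mem_head.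
  by rewrite in_cons (mem_rem (f's j)) orbT.
- move=> y; rewrite in_cons => /orP [/eqP ->|ys0].
    by exists ord0; rewrite unlift_none; left.
  have [e|ynx] := eqVneq y (- x).
    by exists ord0; rewrite unlift_none; right.
  have ys : y \in s' by rewrite ms' ynx ys0.
  have [j [e|e]] := f'c y ys.
    by exists (lift ord0 j); rewrite liftK; left.
  by exists (lift ord0 j); rewrite liftK; right.
move=> i j; case: (unliftP ord0 i) => [i' ->|->]; case: (unliftP ord0 j) => [j' ->|->];
  rewrite ?liftK ?unlift_none.
- by move=> ne; apply: f'd; apply: contraNN ne => /eqP ->.
- by move=> _; have [h1 h2] := f'x i'; split.
- move=> _; have [h1 h2] := f'x j'; split; first by rewrite eq_sym.
  by apply: contraNN h2 => /eqP ->; rewrite opprK.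
by rewrite eqxx.
Qed.

Definition Jmat k d (f : 'I_d -> 'rV[R]_k) : 'M[R]_(k, d) := \matrix_(i, j) f j 0 i.

Lemma JmatE k d (f : 'I_d -> 'rV[R]_k) x j : (x *m Jmat f) 0 j = pairing (f j) x.
Proof. by rewrite mxE /pairing; apply: eq_bigr => i _; rewrite mxE mulrC. Qed.

Lemma Dp_abs k (N : 'rV[R]_k -> R) f x : is_norm N -> Dp N f -> `|pairing f x| <= N x.
Proof.
move=> hN hf; rewrite ler_norml hf andbT.
by have := hf (- x); rewrite pairingNr normN // lerNl.
Qed.

Lemma Pol_embed k (N : 'rV[R]_k -> R) d : (0 < d)%N -> is_norm N -> Pol d N ->
  exists f : 'I_d -> 'rV[R]_k, [/\ forall i, extreme_point (Dp N) (f i),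
    forall g, extreme_point (Dp N) g -> exists i, g = f i \/ g = - f i,
    forall i j, i != j -> f i != f j /\ f i != - f j,
    forall i, f i != - f i &
    forall x, linf (x *m Jmat f) = N x].
Proof.
move=> d0 hN [_ [s [us ss hs]]]; rewrite dualE // in hs.
have hself : forall x, x \in s -> x != - x.
  move=> x xs; rewrite -addr_eq0 -mulr2n -scaler_nat scaler_eq0 pnatr_eq0 /=.
  case: s us ss hs xs => [|a [|b s1]] //=; first by move=> _ h; lia.
  move=> /andP [] ; rewrite in_cons negb_or => /andP [ab _] _ _ hs xs.
  have ha := proj2 (hs a) (mem_head _ _).
  have bin : b \in [:: a, b & s1] by rewrite !in_cons eqxx orbT.
  have hb := proj2 (hs b) bin.
  have [a0|a0] := eqVneq a 0.
    apply: (@ext_nonzero _ N x b hN (proj1 hb)); last exact: (proj2 (hs x) xs).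
    by apply: contraNN ab => /eqP ->; rewrite a0.
  apply: (@ext_nonzero _ N x a hN (proj1 ha) a0); exact: (proj2 (hs x) xs).
have [f [fs fc fd]] := pairs us ss (fun x xs => proj1 (hs _) (ext_opp hN (proj2 (hs x) xs))) hself.
have fext : forall i, extreme_point (Dp N) (f i) by move=> i; apply/hs.
have fcov : forall g, extreme_point (Dp N) g -> exists i, g = f i \/ g = - f i.
  by move=> g /hs; apply: fc.
exists f; split => //; first by move=> i; apply: hself.
move=> x; apply/eqP; rewrite eq_le; apply/andP; split.
  apply: linf_le; first exact: norm_ge0.
  by move=> j; rewrite JmatE; apply: Dp_abs => //; case: (fext j).
have [g [hg gx]] := ext_norm x hN; rewrite dualE // in hg.
have [i [gi|gi]] := fcov g hg; rewrite -gx gi.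
  by apply: le_trans (ler_norm _) _; rewrite -JmatE linf_ge.
rewrite pairingNl; apply: le_trans (linf_ge _ i); rewrite JmatE.
by rewrite -normrN ler_norm.
Qed.

Lemma Dp_linf_l1 n (b : 'rV[R]_n) : Dp (@linf R n) b -> \sum_j `|b 0 j| <= 1.
Proof.
move=> hb; set u := \row_i Num.sg (b 0 i).
have hu : linf u <= 1.
  by apply: linf_le => // i; rewrite mxE normr_sg; case: (_ != _); rewrite ?ler01.
have := le_trans (hb u) hu.
suff -> : pairing b u = \sum_i `|b 0 i| by [].
by rewrite /pairing; apply: eq_bigr => i _; rewrite mxE normrEsg mulrC.
Qed.

Lemma Dp_scale k (N : 'rV[R]_k -> R) (s : R) h : is_norm N -> `|s| <= 1 -> Dp N h ->
  Dp N (s *: h).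
Proof.
move=> hN hs hh x; rewrite pairingZl; apply: le_trans (ler_norm _) _.
rewrite normrM; apply: le_trans (_ : 1 * `|pairing h x| <= _); last first.
  by rewrite mul1r Dp_abs.
by apply: ler_wpM2r.
Qed.

Lemma HB_extend k1 k2 (N1 : 'rV[R]_k1 -> R) (N2 : 'rV[R]_k2 -> R) (M : 'M[R]_(k1, k2)) h :
  sublin N2 -> (forall x, N2 (x *m M) = N1 x) -> Dp N1 h ->
  exists b, Dp N2 b /\ forall x, pairing b (x *m M) = pairing h x.
Proof.
move=> hN hM hh.
pose F w (x : 'rV[R]_k1) := N2 (w + x *m M) - pairing h x.
pose p w := infI (fun _ : 'rV[R]_k1 => True) (F w).
have Fb : forall w x, - N2 (- w) <= F w x.
  move=> w x; rewrite /F; have := hh x; rewrite -hM => h1.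
  have := (proj1 hN) (w + x *m M) (- w); rewrite [_ + - w]addrC addKr => h2; lra.
have pel : forall w x, p w <= F w x.
  by move=> w x; apply: (infI_le (b := - N2 (- w))) => // y _; apply: Fb.
have pge : forall w c, (forall x, c <= F w x) -> c <= p w.
  by move=> w c hc; apply: (le_infI (x0 := 0)) => // x _; apply: hc.
have psub : sublin p.
  split.
    move=> y1 y2; rewrite -lerBlDl; apply: (pge) => x2.
    rewrite lerBlDl -lerBlDr; apply: (pge) => x1.
    rewrite lerBlDr; apply: le_trans (pel _ (x1 + x2)) _.
    rewrite /F mulmxDl pairingDr.
    have -> : y1 + y2 + (x1 *m M + x2 *m M) = (y1 + x1 *m M) + (y2 + x2 *m M).
      by rewrite addrACA.
    have := (proj1 hN) (y1 + x1 *m M) (y2 + x2 *m M); lra.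
  move=> a y; rewrite le0r => /orP [/eqP -> | a0].
    rewrite mul0r scale0r; apply/eqP; rewrite eq_le; apply/andP; split.
      by apply: le_trans (pel _ 0) _; rewrite /F mul0mx addr0 pairing0r subr0 sublin0.
    apply: (pge) => x; rewrite /F add0r subr_ge0 hM; exact: hh.
  apply/eqP; rewrite eq_le; apply/andP; split.
    rewrite -ler_pdivrMl //; apply: (pge) => x.
    rewrite ler_pdivrMl //.
    apply: le_trans (pel _ (a *: x)) _.
    rewrite /F -scalemxAl -scalerDr (proj2 hN) ?(ltW a0) // pairingZr.
    by rewrite mulrBr.
  apply: (pge) => x.
  have := pel y (a^-1 *: x).
  rewrite -(ler_pM2l a0) => /le_trans; apply; rewrite /F.
  have ha : a != 0 by rewrite lt0r_neq0.
  have -> : y + (a^-1 *: x) *m M = a^-1 *: (a *: y + x *m M).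
    by rewrite scalerDr scalerA mulVf // scale1r scalemxAl.
  rewrite /F (proj2 hN) ?invr_ge0 ?(ltW a0) // pairingZr.
  by rewrite le_eqVlt; apply/orP; left; apply/eqP; field.
have [b [hb _ _]] := HB_ext 0 psub.
have ple : forall w, p w <= N2 w.
  by move=> w; apply: le_trans (pel w 0) _; rewrite /F mul0mx addr0 pairing0r subr0.
have pM : forall u, p (u *m M) = pairing h u.
  move=> u; apply/eqP; rewrite eq_le; apply/andP; split.
    apply: le_trans (pel _ (- u)) _.
    by rewrite /F mulNmx subrr sublin0 // pairingNr sub0r opprK.
  apply: (pge) => x; rewrite /F lerBrDr -pairingDr -mulmxDl hM; exact: hh.
exists b; split; first by move=> w; apply: le_trans (hb w) (ple w).
move=> x; apply/eqP; rewrite eq_le; apply/andP; split.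
  by rewrite -pM hb.
have := hb ((- x) *m M); rewrite pM mulNmx !pairingNr lerN2.
done.
Qed.

Lemma extend kF kG d m (NF : 'rV[R]_kF -> R) (NG : 'rV[R]_kG -> R)
  (fF : 'I_d -> 'rV[R]_kF) (gG : 'I_m -> 'rV[R]_kG) (Phi : 'M[R]_(kF, kG)) :
  (0 < d)%N -> is_norm NF -> is_norm NG ->
  (forall i, extreme_point (Dp NF) (fF i)) ->
  (forall i j, i != j -> fF i != fF j /\ fF i != - fF j) ->
  (forall i, fF i != - fF i) ->
  (forall x, linf (x *m Jmat fF) = NF x) ->
  (forall j, Dp NG (gG j)) ->
  (forall y, linf (y *m Jmat gG) = NG y) ->
  is_emb NF NG Phi ->
  exists A : 'M[R]_(d, m), is_emb (@linf R d) (@linf R m) A /\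
    Jmat fF *m A = Phi *m Jmat gG.
Proof.
move=> d0 hF hG fext fdist fself JF gD JG hPhi.
set JFm := Jmat fF; set JGm := Jmat gG.
pose h j := gG j *m Phi^T.
have hE : forall j x, pairing (h j) x = pairing (gG j) (x *m Phi).
  by move=> j x; rewrite pairing_mul.
have hD : forall j, Dp NF (h j).
  by move=> j x; rewrite hE -(hPhi x); apply: gD.
have hex : forall j, exists a : 'rV[R]_d, [/\ Dp (@linf R d) a,
    forall x, pairing a (x *m JFm) = pairing (h j) x,
    forall i, h j = fF i -> a = delta_mx 0 i &
    forall i, h j = - fF i -> a = - delta_mx 0 i].
  move=> j.
  have [[i [e|e]]|nE] := boolp.pselect (exists i, h j = fF i \/ h j = - fF i).
  - exists (delta_mx 0 i); split.
    + exact: Dp_linf_delta.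
    + by move=> x; rewrite pairing_deltal JmatE e.
    + move=> i' e'; have [->//|ne] := eqVneq i i'.
      by have := proj1 (fdist _ _ ne); rewrite -e -e' eqxx.
    + move=> i' e'; have [ii|ne] := eqVneq i i'.
        by move: (fself i); rewrite {2}ii -e' -e eqxx.
      by have := proj2 (fdist _ _ ne); rewrite -e -e' eqxx.
  - exists (- delta_mx 0 i); split.
    + by apply: Dp_opp; [exact: linf_norm | exact: Dp_linf_delta].
    + by move=> x; rewrite pairingNl pairing_deltal JmatE e pairingNl.
    + move=> i' e'; have [ii|ne] := eqVneq i i'.
        by move: (fself i); rewrite -e e' ii eqxx.
      by have := proj2 (fdist _ _ ne); rewrite -e' e opprK eqxx.
    + move=> i' e'; have [->//|ne] := eqVneq i i'.
      by have := proj1 (fdist _ _ ne); rewrite -[fF i]opprK -e e' opprK eqxx.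
  have [b [hb hbx]] := HB_extend (norm_sublin (linf_norm d)) JF (hD j).
  exists b; split => // i e; case: nE; exists i; by [left | right].
have [a ha] := fin_all_exists hex.
exists (Jmat a).
have key : forall x : 'rV[R]_kF, x *m (JFm *m Jmat a) = x *m (Phi *m JGm).
  move=> x; apply/rowP => j; rewrite mulmxA JmatE mulmxA JmatE.
  by have [_ -> _ _] := ha j; rewrite hE.
split; last first.
  apply/row_matrixP => i; rewrite !rowE; exact: key.
move=> w; apply/eqP; rewrite eq_le; apply/andP; split.
  apply: linf_le; first exact: linf_ge0.
  move=> j; rewrite JmatE; apply: Dp_abs; first exact: linf_norm.
  by have [] := ha j.
have [i wi] := linf_attain w d0.
(* find a column equal to +- delta i *)
have [k [hk kx]] := HB_extend (norm_sublin hG) hPhi (proj1 (fext i)).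
have [b [hb bx]] := HB_extend (norm_sublin (linf_norm m)) JG hk.
have efi : fF i = \sum_j `|b 0 j| *: (Num.sg (b 0 j) *: h j).
  apply: row_eq_pairing => x; rewrite pairing_sum -kx -bx.
  transitivity (\sum_j b 0 j * pairing (gG j) (x *m Phi)).
    by rewrite {1}/pairing; apply: eq_bigr => j _; rewrite JmatE.
  apply: eq_bigr => j _; rewrite !pairingZl hE mulrA [`|_| * _]mulrC -numEsg.
  by [].
have fi0 : fF i != 0.
  by apply: contraNN (fself i) => /eqP ->; rewrite oppr0.
have [j0 bj0] : exists j0, b 0 j0 != 0.
  apply/boolp.not_existsP => hall; move/eqP: fi0; apply; rewrite efi.
  apply: big1 => j _; have : b 0 j = 0 by apply/eqP; apply/negPn/negP; apply: (hall j).
  by move=> ->; rewrite normr0 scale0r.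
have hg : forall j, Dp NF (Num.sg (b 0 j) *: h j).
  by move=> j; apply: Dp_scale => //; rewrite normr_sg; case: (_ != _); rewrite ?ler01.
have := ext_multi (i0 := j0) hF (fext i) (fun j => normr_ge0 _) (Dp_linf_l1 hb) hg efi.
rewrite normr_gt0 bj0 => /(_ isT) e.
have [_ _ h1 h2] := ha j0.
apply: le_trans (linf_ge _ j0); rewrite JmatE wi.
move: bj0; rewrite neq_lt => /orP [bn|bp].
  have sg1 : Num.sg (b 0 j0) = -1 by apply/eqP; rewrite sgr_cp0.
  rewrite sg1 scaleN1r in e.
  by rewrite (h2 i) ?pairingNl ?pairing_deltal ?normrN // -e opprK.
have sg1 : Num.sg (b 0 j0) = 1 by apply/eqP; rewrite sgr_cp0.
rewrite sg1 scale1r in e.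
by rewrite (h1 i e) pairing_deltal.
Qed.

Lemma Ppol_Pinf d m r (e : R) n : (0 < d)%N -> (0 < m)%N ->
  P_pol d m r e n -> P_inf d m r e n.
Proof.
move=> d0 m0 [_ h] c.
exact: (h d (@linf R d) (linf_norm d) (linf_Pol d0) m (@linf R m) (linf_norm m)
  (linf_Pol m0) c).
Qed.

Lemma Pinf_Ppol d m r (e : R) n : (0 < d)%N -> (0 < m)%N -> (0 < r)%N ->
  P_inf d m r e n -> P_pol d m r e n.
Proof.
move=> d0 m0 r0 hP; split.
  have [gam [hgam _]] := hP (fun _ => Ordinal r0).
  have rf : row_free gam.
    apply: inj_row_free => v hv; apply/rowP => i; rewrite mxE; apply/eqP.
    rewrite -normr_eq0 eq_le normr_ge0 andbT.
    apply: le_trans (linf_ge v i) _; rewrite -hgam hv.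
    by apply: linf_le => // j; rewrite mxE normr0.
  by move/eqP: rf => <-; apply: rank_leq_col.
move=> kF NF hNF polF kG NG hNG polG c.
have [fF [fext fcov fdist fself JF]] := Pol_embed d0 hNF polF.
have [gG [gext gcov gdist gself JG]] := Pol_embed m0 hNG polG.
pose c' := fun M : 'M[R]_(d, n) => c (Jmat fF *m M).
have [gam [hgam [i hi]]] := hP c'.
exists (Jmat gG *m gam); split.
  by move=> y; rewrite mulmxA hgam JG.
exists i => S [Phi [hPhi ->]].
have [A [hA eA]] := extend d0 hNF hNG fext fdist fself JF (fun j => proj1 (gext j)) JG hPhi.
have hS : comp_emb (@linf R d) (@linf R m) gam (A *m gam) by exists A.
have [S'' [h1 h2 h3]] := hi _ hS.
exists (Jmat fF *m S''); split.
- by move=> x; rewrite mulmxA h1 JF.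
- exact: h2.
move=> x hx.
have -> : x *m (Phi *m (Jmat gG *m gam) - Jmat fF *m S'') =
          (x *m Jmat fF) *m (A *m gam - S'').
  by rewrite mulmxA -eA -mulmxA mulmxBr mulmxBr !mulmxA.
by apply: h3; rewrite JF.
Qed.

End Aux.

Unset Implicit Arguments.

Theorem proposition6p31 (R : realType) (d m r : nat) (e : R) :
  (0 < d)%N -> (0 < m)%N -> (0 < r)%N -> 0 < e ->
  forall n : nat, is_least (P_pol d m r e) n <-> is_least (P_inf d m r e) n.
Proof.
move=> d0 m0 r0 e0.
have eqv : forall n, P_pol d m r e n <-> P_inf d m r e n.
  by move=> n; split; [exact: Ppol_Pinf | exact: Pinf_Ppol].
move=> n; split => [[h1 h2]|[h1 h2]]; split.
- by apply/eqv.
- by move=> k /eqv; apply: h2.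
- by apply/eqv.
by move=> k /eqv; apply: h2.
Qed.
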